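(* Let \(\mathcal{I}\) be an instance of 3-SAT and let \(G(\mathcal{I})\), \(T(\mathcal{I})\) be as constructed below. If \(\mathcal{I}\) does not have a satisfying assignment, then \(T(\mathcal{I})\) is not the \(\mathcal{F}\)-tree of any MNS ordering of \(G(\mathcal{I})\), and therefore also not the \(\mathcal{F}\)-tree of any MCS ordering of \(G(\mathcal{I})\).
   Context: Let \(\mathcal{I}\) have variables \(x_1,\dots,x_k\) and clauses \(C_1,\dots,C_l\), each a disjunction of three literals. \(G(\mathcal{I})\) has vertices: literal vertices \(X=\{x_1,\dots,x_k,\overline{x_1},\dots,\overline{x_k}\}\), clause vertices \(c_1,\dots,c_l\), and six vertices \(r,p,q,a,b,t\). Edges: any two vertices of \(X\) are adjacent except the pairs \(x_j\overline{x_j}\); the clause vertices are pairwise nonadjacent; \(c_i\) is adjacent to every vertex of \(X\) except the three literal vertices of the literals of \(C_i\); each of \(r,p,q,a\) is adjacent to all literal vertices and all clause vertices; \(b\) is adjacent to all literal vertices; additionally the edges \(ab,ap,aq,bq,br,bt,pr,qr,qt\); no other edges. \(T(\mathcal{I})\) is the spanning tree consisting of all edges of \(G(\mathcal{I})\) incident to \(r\) together with the edges \(pa\) and \(bt\). With \(n\) the number of vertices: an MCS ordering is produced by repeatedly choosing an unnumbered vertex with the largest number of numbered neighbors; an MNS ordering uses set labels (all \(\emptyset\), start vertex gets \(\{n+1\}\); repeatedly pick an unnumbered vertex with inclusion-maximal label as \(v_j\) and add \(j\) to the labels of its unnumbered neighbors); ties are arbitrary. The \(\mathcal{F}\)-tree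 of an ordering \((v_1,\dots,v_n)\) has, for each \(v\ne v_1\), an edge from \(v\) to its leftmost neighbor in the ordering. *)

(* Defs.v *)
From mathcomp Require Import all_boot.
Set Implicit Arguments. Unset Strict Implicit. Unset Printing Implicit Defensive.

(* A literal over variables x_0..x_{k-1}: (i, true) = x_i, (i, false) = ~x_i. *)
Definition lit (k : nat) := ('I_k * bool)%type.

Definition satisfiable (k l : nat) (cl : 'I_l -> 'I_3 -> lit k) : Prop :=
  exists asg : 'I_k -> bool, forall j : 'I_l, exists m : 'I_3,
    asg (cl j m).1 = (cl j m).2.

(* Vertices of G(I): literal vertices, clause vertices, and six special
   vertices indexed by 'I_6 : 0 = r, 1 = p, 2 = q, 3 = a, 4 = b, 5 = t. *)
Definition vert (k l : nat) := ((lit k + 'I_l) + 'I_6)%type.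

Definition litv {k l} (L : lit k) : vert k l := inl (inl L).
Definition clv {k l} (j : 'I_l) : vert k l := inl (inr j).
Definition vr {k l} : vert k l := inr (@Ordinal 6 0 isT).
Definition vp {k l} : vert k l := inr (@Ordinal 6 1 isT).
Definition vq {k l} : vert k l := inr (@Ordinal 6 2 isT).
Definition va {k l} : vert k l := inr (@Ordinal 6 3 isT).
Definition vb {k l} : vert k l := inr (@Ordinal 6 4 isT).
Definition vt {k l} : vert k l := inr (@Ordinal 6 5 isT).

(* edges among the six special vertices: ab, ap, aq, bq, br, bt, pr, qr, qt *)
Definition special_edges : seq (nat * nat) :=
  [:: (3,4); (3,1); (3,2); (4,2); (4,0); (4,5); (1,0); (2,0); (2,5)].

Definition special_adj (x y : 'I_6) : bool :=
  ((val x, val y) \in special_edges) || ((val y, val x) \in special_edges).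

Definition adj (k l : nat) (cl : 'I_l -> 'I_3 -> lit k) (u v : vert k l) : bool :=
  match u, v with
  | inl (inl L), inl (inl L') => L.1 != L'.1
  | inl (inl L), inl (inr j) | inl (inr j), inl (inl L) =>
      ~~ [exists m : 'I_3, cl j m == L]
  | inl (inr _), inl (inr _) => false
  | inl (inl _), inr o | inr o, inl (inl _) => val o < 5   (* r,p,q,a,b *)
  | inl (inr _), inr o | inr o, inl (inr _) => val o < 4   (* r,p,q,a *)
  | inr o, inr o' => special_adj o o'
  end.

Definition tadj (k l : nat) (cl : 'I_l -> 'I_3 -> lit k) (u v : vert k l) : bool :=
  (adj cl u v && ((u == vr) || (v == vr)))
  || ((u == vp) && (v == va)) || ((u == va) && (v == vp))
  || ((u == vb) && (v == vt)) || ((u == vt) && (v == vb)).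

Section Orderings.
Variables (V : finType) (e : rel V).

Definition is_ordering (s : seq V) : Prop := uniq s /\ forall v, v \in s.

Definition is_MCS (s : seq V) : Prop :=
  is_ordering s /\
  forall (j : nat) (x0 w : V), j < size s -> w \notin take j s ->
    count (fun u => e u w) (take j s) <= count (fun u => e u (nth x0 s j)) (take j s).

(* MNS: the label of an unnumbered vertex w after numbering v_1..v_j is the
   set of indices i <= j with v_i adjacent to w (0-based positions here);
   v_{j+1} must have an inclusion-maximal label among unnumbered vertices.
   (The start vertex's special label {n+1} just makes v_1 = start, which is
   arbitrary.) *)
Definition mns_label (x0 : V) (s : seq V) (j : nat) (w : V) : seq nat :=
  [seq i <- iota 0 j | e (nth x0 s i) w].

Definition is_MNS (s : seq V) : Prop :=
  is_ordering s /\
  forall (j : nat) (x0 w : V), j < size s -> w \notin take j s ->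
    {subset mns_label x0 s j (nth x0 s j) <= mns_label x0 s j w} ->
    {subset mns_label x0 s j w <= mns_label x0 s j (nth x0 s j)}.

Definition leftmost_nb (s : seq V) (u v : V) : bool :=
  e u v && [forall w, e u w ==> (index v s <= index w s)].

Definition ftree_adj (s : seq V) (u v : V) : bool :=
  ((u \notin take 1 s) && leftmost_nb s u v)
  || ((v \notin take 1 s) && leftmost_nb s v u).

Definition is_Ftree_of (t : rel V) (s : seq V) : Prop :=
  forall u v, t u v = ftree_adj s u v.

End Orderings.

(* Main.v *)
Require Import Defs.
From mathcomp Require Import all_boot.
Set Implicit Arguments. Unset Strict Implicit. Unset Printing Implicit Defensive.

Lemma mns_size (V : finType) (e : rel V) s x0 j w : j <= size s ->
  size (mns_label e x0 s j w) = count (fun u => e u w) (take j s).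
Proof.
move=> Hj; rewrite /mns_label size_filter -(map_nth_iota0 x0 Hj) count_map.
by apply: eq_count.
Qed.

Lemma mcs_mns (V : finType) (e : rel V) s : is_MCS e s -> is_MNS e s.
Proof.
move=> [Ho H]; split=> // j x0 w Hj Hw Hsub.
have Hu : uniq (mns_label e x0 s j (nth x0 s j)).
  by rewrite /mns_label filter_uniq // iota_uniq.
have Hsz := H j x0 w Hj Hw.
have Hle : size (mns_label e x0 s j w) <= size (mns_label e x0 s j (nth x0 s j)).
  by rewrite !mns_size ?(ltnW Hj).
have [_ Heq] := uniq_min_size Hu Hsub Hle.
by move=> i; rewrite Heq.
Qed.

Lemma mns_step (V : finType) (e : rel V) s : is_MNS e s ->
  forall v w, index v s < index w s ->
  (forall u, index u s < index v s -> e u v -> e u w) ->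
  forall u, index u s < index v s -> e u w -> e u v.
Proof.
move=> [[Hun Hall] H] v w Hvw Hsub u Hu Huw.
have Hj : index v s < size s by rewrite index_mem.
have Hw : w \notin take (index v s) s by rewrite in_take // -leqNgt ltnW.
have := H (index v s) v w Hj Hw; rewrite nth_index // => H2.
have Hi : index u s \in mns_label e v s (index v s) w.
  by rewrite /mns_label mem_filter mem_iota /= add0n Hu nth_index ?Hall // andbT.
have Hs2 : {subset mns_label e v s (index v s) v <= mns_label e v s (index v s) w}.
  move=> i; rewrite /mns_label !mem_filter !mem_iota /= add0n.
  case/andP => He Hi'.
  have Hs : i < size s by exact: ltn_trans Hi' Hj.
  rewrite Hi' andbT; move: He.
  have Hidx : index (nth v s i) s = i by rewrite index_uniq.
  apply: Hsub; by rewrite Hidx.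
have := H2 Hs2 _ Hi.
rewrite /mns_label mem_filter mem_iota /= add0n Hu nth_index ?Hall //.
by rewrite andbT.
Qed.

Lemma LN (V : finType) (e t : rel V) s : is_ordering s -> is_Ftree_of e t s ->
  forall u w, index u s != 0 -> e u w ->
  exists v, [&& t u v, e u v & index v s <= index w s].
Proof.
move=> [Hun Hall] Hf u w Hu Huw.
case: (arg_minnP (fun v => index v s) Huw) => v Hv Hmin.
exists v; rewrite Hv Hmin // andbT Hf /ftree_adj.
have -> : u \notin take 1 s by rewrite in_take // -leqNgt lt0n.
have -> : leftmost_nb e s u v.
  rewrite /leftmost_nb Hv /=; apply/forallP => x; apply/implyP => Hx; exact: Hmin.
by [].
Qed.

Ltac vcase u := case: u => [[?|?]|[[|[|[|[|[|[|?]]]]]] ?]].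

Lemma tadj_t k l (cl : 'I_l -> 'I_3 -> lit k) v : tadj cl vt v -> v == vb.
Proof. by vcase v. Qed.

Lemma tadj_a k l (cl : 'I_l -> 'I_3 -> lit k) v : tadj cl va v -> v == vp.
Proof. by vcase v. Qed.

Lemma adj_t k l (cl : 'I_l -> 'I_3 -> lit k) u : adj cl u vt -> (u == vb) || (u == vq).
Proof. by vcase u. Qed.

Lemma adj_lit_cl k l (cl : 'I_l -> 'I_3 -> lit k) L c :
  adj cl (litv L) (clv c) = ~~ [exists m, cl c m == L].
Proof. by []. Qed.

Lemma adj_bq k l (cl : 'I_l -> 'I_3 -> lit k) u : adj cl u vb -> u != vq -> adj cl u vq.
Proof. by vcase u. Qed.

Lemma adj_b k l (cl : 'I_l -> 'I_3 -> lit k) u c : adj cl u vb ->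
  [|| u == vq, u == vt, adj cl u (clv c) | [exists m, litv (cl c m) == u]].
Proof.
case: u => [[L|c']|o]; last by move: o; case=> [[|[|[|[|[|[|?]]]]]] ?].
  2: by [].
move=> _; case: (boolP [exists m, cl c m == L]) => [/existsP[m /eqP Hm]|Hn].
  by rewrite !orbT.
by rewrite adj_lit_cl Hn orbT.
Qed.

Lemma adj_lit k l (cl : 'I_l -> 'I_3 -> lit k) u y : adj cl u (litv y) ->
  [|| [exists L, (u == litv L) && (L.1 != y.1)], [exists c, u == clv c],
      u == vr, u == vp, u == vq, u == va | u == vb].
Proof.
case: u => [[L|c]|o]; last by move: o; case=> [[|[|[|[|[|[|?]]]]]] ?] //= _; rewrite ?orbT.
  move=> H; have -> : [exists L0, (litv L == litv L0 :> vert k l) && (L0.1 != y.1)].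
    by apply/existsP; exists L; rewrite eqxx.
  by [].
move=> _; have -> : [exists c0, clv c == clv c0 :> vert k l] by apply/existsP; exists c.
by rewrite orbT.
Qed.

Lemma adj_ll k l (cl : 'I_l -> 'I_3 -> lit k) L L' :
  adj cl (litv L) (litv L') = (L.1 != L'.1).
Proof. by []. Qed.

Lemma wit k l (cl : 'I_l -> 'I_3 -> lit k) (j0 : 'I_l) v : v != vr ->
  exists u, [&& u != v, adj cl u v & ~~ tadj cl u v].
Proof.
case: v => [[L|c]|o].
- by move=> _; exists vp.
- by move=> _; exists vp.
move: o; case=> [[|[|[|[|[|[|?]]]]]] ?] //.
- by move=> _; exists (clv j0).
- by move=> _; exists va.
- by move=> _; exists vq.
- by move=> _; exists vq.
- by move=> _; exists vq.
Qed.

Unset Implicit Arguments.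

Theorem lemma12 (k l : nat) (cl : 'I_l -> 'I_3 -> lit k) :
  ~ satisfiable cl ->
  (forall s : seq (vert k l), is_MNS (adj cl) s -> ~ is_Ftree_of (adj cl) (tadj cl) s) /\
  (forall s : seq (vert k l), is_MCS (adj cl) s -> ~ is_Ftree_of (adj cl) (tadj cl) s).
Proof.
move=> Hns.
have [j0 _] : exists j0 : 'I_l, True.
  move: cl Hns; case: l => [|l'] cl Hns; last by exists ord0.
  by exfalso; apply: Hns; exists (fun _ => true); case.
suff Hmns : forall s, is_MNS (adj cl) s -> ~ is_Ftree_of (adj cl) (tadj cl) s.
  by split=> // s /mcs_mns; exact: Hmns.
move=> s Hm Hf; apply: Hns.
have Ho := Hm.1; have [Hun Hall] := Ho.
have Hinj : forall u v, index u s = index v s -> u = v.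
  by move=> u v H; rewrite -(nth_index u (Hall u)) H nth_index.
have Hneq : forall u v, u != v -> index u s != index v s.
  by move=> u v; apply: contra => /eqP /Hinj ->.
have Hstep := mns_step Hm.
have HLN := LN Ho Hf.
have Hr0 : index vr s = 0.
  apply/eqP; apply/negPn/negP => Hr.
  have Hsz : 0 < size s by move: (Hall vr); case: (s).
  pose v1 := nth vr s 0.
  have Hv1 : index v1 s = 0 by rewrite index_uniq.
  have Hv1r : v1 != vr by apply: contraNneq Hr => <-; rewrite Hv1.
  have [u /and3P[Huv Huadj Hut]] := @wit _ _ cl j0 _ Hv1r.
  have Hu0 : index u s != 0 by have := Hneq u v1 Huv; rewrite Hv1.
  have [v /and3P[Htv _ Hle]] := HLN u v1 Hu0 Huadj.
  move: Hle; rewrite Hv1 leqn0 => /eqP Hv0.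
  have Hvv : v = v1 by apply: Hinj; rewrite Hv0 Hv1.
  by move: Hut; rewrite -Hvv Htv.
have Hidx0 : forall u, u != vr -> 0 < index u s.
  by move=> u /(Hneq u vr); rewrite Hr0 lt0n.
have Hlt : forall u v, index u s <= index v s -> u != v -> index u s < index v s.
  by move=> u v H /(Hneq u v); rewrite ltn_neqAle H andbT.
have Hbq : index vb s < index vq s.
  have Ht0 : index vt s != 0 by rewrite -lt0n; apply: Hidx0.
  have [v /and3P[Htv _ Hle]] := HLN vt vq Ht0 isT.
  have /eqP Hvb := tadj_t Htv; rewrite Hvb in Hle.
  by apply: Hlt Hle _.
have Hpb : index vp s < index vb s.
  have Ha0 : index va s != 0 by rewrite -lt0n; apply: Hidx0.
  have [v /and3P[Htv _ Hle]] := HLN va vb Ha0 isT.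
  have /eqP Hvp := tadj_a Htv; rewrite Hvp in Hle.
  by apply: Hlt Hle _.
have Hbt : index vb s < index vt s.
  have [//|Htb] := ltnP (index vb s) (index vt s).
  have Htb' : index vt s < index vb s by apply: Hlt Htb _.
  have Htq : index vt s < index vq s := ltn_trans Htb' Hbq.
  have Hr' : index vr s < index vt s by rewrite Hr0; apply: Hidx0.
  suff : adj cl vr vt by [].
  apply: (Hstep vt vq Htq _ vr Hr' isT).
  move=> u Hu /adj_t /orP[/eqP Hu'|/eqP Hu']; rewrite Hu' in Hu.
    by move: (ltn_trans Hu Htb'); rewrite ltnn.
  by move: (ltn_trans Hu Htq); rewrite ltnn.
have Hcl : forall c, index vb s < index (clv c) s.
  move=> c; have [//|Hc] := ltnP (index vb s) (index (clv c) s).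
  have Hc' : index (clv c) s < index vb s by apply: Hlt Hc _.
  suff : adj cl (clv c) vb by [].
  apply: (Hstep vb vq Hbq _ (clv c) Hc' isT).
  move=> u Hu Hub; apply: adj_bq Hub _; apply/eqP => Huq; move: Hu.
  by rewrite Huq ltnNge (ltnW Hbq).
have Hlitc : forall c, exists m, index (litv (cl c m)) s < index vb s.
  move=> c; suff: [exists m, index (litv (cl c m)) s < index vb s].
    by case/existsP => m; exists m.
  apply: contraT => /existsPn Hn.
  suff : adj cl vp vb by [].
  apply: (Hstep vb (clv c) (Hcl c) _ vp Hpb isT).
  move=> u Hu Hub; case/or4P: (adj_b c Hub) => [/eqP Huq | /eqP Hut | // | /existsP [m /eqP Hm0]].
  - by move: Hu; rewrite Huq ltnNge (ltnW Hbq).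
  - by move: Hu; rewrite Hut ltnNge (ltnW Hbt).
  - by move: (Hn m); rewrite Hm0 Hu.
pose asg := fun i => index (litv (i, true) : vert k l) s < index (litv (i, false) : vert k l) s.
have Hasg : forall i b, asg i != b ->
    index (litv (i, ~~ b) : vert k l) s < index (litv (i, b) : vert k l) s.
  move=> i [] /=; rewrite /asg; case: ltnP => // Hle _.
  apply: Hlt Hle _.
  by apply/eqP => -[].
exists asg => c.
have [m _ Hmin] := @arg_minnP _ (ord0 : 'I_3) xpredT (fun m => index (litv (cl c m) : vert k l) s) isT.
exists m; set y := cl c m in Hmin *.
have [m1 Hm1] := Hlitc c.
have Hyb : index (litv y) s < index vb s := leq_ltn_trans (Hmin m1 isT) Hm1.
case: (boolP (asg y.1 == y.2)) => [/eqP //|Hne]; exfalso.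
have Hyy := Hasg _ _ Hne.
set yb := (y.1, ~~ y.2) in Hyy.
have Hyyb : (y.1, ~~ y.2) = yb by [].
have Hyc : index (litv y) s < index (clv c) s := ltn_trans Hyb (Hcl c).
have Hnin : forall L, index (litv L) s < index (litv y) s -> ~~ [exists m', cl c m' == L].
  move=> L HL; apply/existsP => -[m' /eqP Hm'].
  by move: (Hmin m' isT); rewrite Hm' leqNgt HL.
suff : adj cl (litv yb) (litv y) by rewrite adj_ll /= eqxx.
apply: (Hstep (litv y) (clv c) Hyc _ (litv yb) Hyy); last by rewrite adj_lit_cl Hnin.
move=> u Hu Huy; have := adj_lit Huy.
case/orP => [/existsP[L /andP[/eqP Hu' _]] | ].
  by rewrite Hu' adj_lit_cl Hnin // -Hu'.
case/orP => [/existsP[c' /eqP Hu'] | ].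
  by move: (ltn_trans (ltn_trans Hu Hyb) (Hcl c')); rewrite Hu' ltnn.
case/orP => [/eqP -> // | ].
case/orP => [/eqP -> // | ].
case/orP => [/eqP Hu' | ].
  by move: (ltn_trans (ltn_trans Hu Hyb) Hbq); rewrite Hu' ltnn.
case/orP => [/eqP -> // | /eqP Hu'].
by move: (ltn_trans Hu Hyb); rewrite Hu' ltnn.
Qed.
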